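(* Consider the one-dimensional obstacle problem $\min(v_t + \mathcal{A} v, v-\varphi(t,x)) = f(t,x)$ on $(0,T)\times(X_{\min},X_{\max})$ with $\mathcal{A} v = -a(t,x) v_{xx} + b(t,x) v_x + r(t,x) v$, $a=\frac12\sigma^2$, under the assumptions: $a$, $b$, $r$ bounded; there is $\eta_0>0$ with $a(t,x)\geq \eta_0$ for all $(t,x)$; and $a$ is Lipschitz continuous in $x$ uniformly in $t$. Use the uniform grid $x_j = X_{\min}+jh$, $j=0,\dots,J+1$, $h=(X_{\max}-X_{\min})/(J+1)$, time step $\tau=T/N$, $t_n=n\tau$, and let $A$ be the $J\times J$ centered finite-difference matrix $A=\frac{1}{h^2}\mathrm{tridiag}(-a_i,\,2a_i,\,-a_i)+\frac{1}{2h}\mathrm{tridiag}(-b_i,\,0,\,b_i)+\mathrm{diag}(r_i)$ (with $a_i=a(t,x_i)$ etc.), $q^{n}$ the vector containing the Dirichlet boundary contributions, $\varphi^{n}_j=\varphi(t_n,x_j)$, $f^n_j=f(t_n,x_j)$, $g^{n}=\varphi^{n}+f^{n}$. Let $u^n\in\mathbb{R}^J$ solve the BDF2 obstacle scheme $$\min\Big( (I_J + \tfrac{2}{3}\tau A)\, u^{n+1} - \tfrac{4}{3} u^n + \tfrac{1}{3} u^{n-1} + \tfrac{2}{3} \tau q^{n+1} - \tfrac{2}{3}\tau f^{n+1},\ u^{n+1}-g^{n+1}\Big) = 0,\quad n\geq 1,$$ and let $v^n\in\mathbb{R}^J$ (values $v(t_n,x_j)$ of some function $v$) solve the perturbed scheme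 $$\min\Big( (I_J + \tfrac{2\tau}{3} A) v^{n+1} - \tfrac{4}{3} v^n + \tfrac{1}{3} v^{n-1} + \tfrac{2\tau}{3} q^{n+1} - \tfrac{2\tau}{3} f^{n+1} - \tfrac{2\tau}{3} \bar\varepsilon^n,\ v^{n+1}- g^{n+1}\Big) = 0,\quad n\geq1,$$ for given perturbations (consistency errors) $\bar\varepsilon^n\in\mathbb{R}^J$. Let $e^n := v^n-u^n$, let $N(x):=\big(\sum_{j=1}^{J+1}|x_j-x_{j-1}|^2\big)^{1/2}$ for $x\in\mathbb{R}^J$ (with $x_0:=x_{J+1}:=0$), and let $\eta>0$, $\gamma\geq 0$ be constants such that $\langle e, Ae\rangle \geq \eta N(e/h)^2-\gamma\|e\|_2^2$ for all $e\in\mathbb{R}^J$ (such constants exist under the assumptions above). Then, for $\tau>0$ sufficiently small, there exist a constant $C_1$ independent of $n$ and a constant $\bar\gamma>0$ such that for all $t_n\leq T$ $$e^{-\bar\gamma t_n} \|e^{n+1}\|^2_2 + \tau\eta \sum_{k=1}^{n} e^{-\bar \gamma t_k} N(e^{k+1}/h)^2 \leq C_1\Big(\|e^0\|^2_2 + \|e^1\|^2_2 + \tau \sum_{k=1}^{n} e^{-\bar \gamma t_k} \|\bar\varepsilon^{k}\|^2_2\Big),$$ where $N(e^k/h)^2=\sum_{j=1}^{J+1} \big|\frac{e^k_j-e^k_{j-1}}{h}\big|^2$.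
   Context: Unconditional $L^2$ stability of the BDF2 obstacle scheme in the 1D setting: the matrix $A$ may in general depend on time but is written without time index. The proof uses the variational characterization $\min(Bx-c,x-g)=0 \iff x\geq g$ and $\langle Bx-c, w-x\rangle\geq 0$ for all $w\geq g$, and in it $\bar\gamma = 2+4\gamma$. *)

(* Defs.v *)
From HB Require Import structures.
From mathcomp Require Import all_boot all_order all_algebra.
From mathcomp Require Import all_classical all_reals all_analysis.
Set Implicit Arguments. Unset Strict Implicit. Unset Printing Implicit Defensive.
Import Order.TTheory GRing.Theory Num.Theory.
Local Open Scope ring_scope.

Section BDF2.
Variable R : realType.

Definition nrm2 (J : nat) (x : 'cV[R]_J) : R := \sum_(i < J) x i 0 ^+ 2.

Definition dotv (J : nat) (x y : 'cV[R]_J) : R := \sum_(i < J) x i 0 * y i 0.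

(* padding: padv x 0 = 0, padv x j = x_j (1 <= j <= J, stored at index j-1),
   padv x (J+1) = 0 *)
Definition padv (J : nat) (x : 'cV[R]_J) (k : nat) : R :=
  match k with
  | 0 => 0
  | k'.+1 => oapp (fun i : 'I_J => x i 0) 0 (insub k')
  end.

Definition Nsq (J : nat) (x : 'cV[R]_J) : R :=
  \sum_(0 <= j < J.+1) (padv x j.+1 - padv x j) ^+ 2.

(* mesh size and grid points x_j = Xmin + j h; row i : 'I_J is node j = i+1 *)
Definition meshh (Xmin Xmax : R) (J : nat) : R := (Xmax - Xmin) / (J.+1)%:R.
Definition xnode (Xmin Xmax : R) (J : nat) (j : nat) : R :=
  Xmin + j%:R * meshh Xmin Xmax J.

(* centered finite difference matrix at time t:
   A = 1/h^2 tridiag(-a_i, 2a_i, -a_i) + 1/(2h) tridiag(-b_i, 0, b_i) + diag(r_i) *)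
Definition FDmat (a b r : R -> R -> R) (Xmin Xmax : R) (J : nat) (t : R)
  : 'M[R]_J :=
  let h := meshh Xmin Xmax J in
  \matrix_(i < J, k < J)
    (let xi := xnode Xmin Xmax J i.+1 in
     if (k == i :> nat) then 2 * a t xi / h ^+ 2 + r t xi
     else if (k == i.+1 :> nat) then - a t xi / h ^+ 2 + b t xi / (2 * h)
     else if (k.+1 == i :> nat) then - a t xi / h ^+ 2 - b t xi / (2 * h)
     else 0).

Definition gridv (F : R -> R -> R) (Xmin Xmax : R) (J : nat) (t : R)
  : 'cV[R]_J := \col_(i < J) F t (xnode Xmin Xmax J i.+1).

End BDF2.

(* Main.v *)
Require Import Defs.
From HB Require Import structures.
From mathcomp Require Import all_boot all_order all_algebra.
From mathcomp Require Import all_classical all_reals all_analysis.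
From mathcomp Require Import ring lra.
Import Order.TTheory GRing.Theory Num.Theory.
Local Open Scope ring_scope.

Section Helpers.
Variable R : realType.
Variable J : nat.
Implicit Types x y z : 'cV[R]_J.

Lemma dotvC x y : dotv x y = dotv y x.
Proof. by rewrite /dotv; apply: eq_bigr => i _; rewrite mulrC. Qed.
Lemma dotvDl x y z : dotv (x + y) z = dotv x z + dotv y z.
Proof. by rewrite /dotv -big_split; apply: eq_bigr => i _; rewrite mxE mulrDl. Qed.
Lemma dotvNl x z : dotv (- x) z = - dotv x z.
Proof. by rewrite /dotv -sumrN; apply: eq_bigr => i _; rewrite mxE mulNr. Qed.
Lemma dotvZl (c : R) x z : dotv (c *: x) z = c * dotv x z.
Proof. by rewrite /dotv mulr_sumr; apply: eq_bigr => i _; rewrite mxE mulrA. Qed.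
Lemma dotvBl x y z : dotv (x - y) z = dotv x z - dotv y z.
Proof. by rewrite dotvDl dotvNl. Qed.
Lemma dotvDr x y z : dotv z (x + y) = dotv z x + dotv z y.
Proof. by rewrite dotvC dotvDl !(dotvC z). Qed.
Lemma dotvBr x y z : dotv z (x - y) = dotv z x - dotv z y.
Proof. by rewrite dotvC dotvBl !(dotvC z). Qed.
Lemma dotvZr (c : R) x z : dotv z (c *: x) = c * dotv z x.
Proof. by rewrite dotvC dotvZl (dotvC z). Qed.
Lemma dotvNr x z : dotv z (- x) = - dotv z x.
Proof. by rewrite dotvC dotvNl (dotvC z). Qed.
Lemma nrm2E x : nrm2 x = dotv x x.
Proof. by rewrite /nrm2 /dotv; apply: eq_bigr => i _; rewrite expr2. Qed.
Lemma nrm2_ge0 x : 0 <= nrm2 x.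
Proof. by rewrite /nrm2; apply: sumr_ge0 => i _; apply: sqr_ge0. Qed.
Lemma Nsq_ge0 x : 0 <= Nsq x.
Proof. by rewrite /Nsq; apply: sumr_ge0 => i _; apply: sqr_ge0. Qed.

Lemma min0P (p q : R) : Num.min p q = 0 -> [/\ 0 <= p, 0 <= q & p * q = 0].
Proof.
rewrite /Num.min; case: ifP => H E.
  by subst; split => //; [exact: ltW | rewrite mul0r].
by subst; move: H => /negbT; rewrite -leNgt => H; split => //; rewrite mulr0.
Qed.

Lemma var_ineq (P x g w : 'cV[R]_J) :
  (forall i, Num.min (P i 0) ((x - g) i 0) = 0) ->
  (forall i, 0 <= (w - g) i 0) -> 0 <= dotv P (w - x).
Proof.
move=> H Hw; rewrite /dotv; apply: sumr_ge0 => i _.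
have [h1 h2 h3] := min0P _ _ (H i).
have : P i 0 * (w - x) i 0 = P i 0 * (w - g) i 0 - P i 0 * (x - g) i 0.
  by rewrite !mxE; ring.
by move=> ->; rewrite h3 subr0; apply: mulr_ge0.
Qed.

Lemma bdf2_step (A : 'M[R]_J) (a b c eps : 'cV[R]_J) (tau eta gam alpha Ns : R) :
 0 <= tau -> 0 <= gam ->
 dotv (a + (2/3*tau) *: (A *m a) - (4/3) *: b + (1/3) *: c - (2/3*tau) *: eps) a <= 0 ->
 eta * Ns - gam * nrm2 a <= dotv a (A *m a) ->
 alpha <= 1 - tau * (2 + 4*gam) ->
 alpha * (nrm2 a + nrm2 (2*:a - b)) + 4*tau*eta*Ns
   <= nrm2 b + nrm2 (2*:b - c) + 2*tau*nrm2 eps.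
Proof.
move=> t0 g0 H1 H2 H3.
have H4 := nrm2_ge0 (a - 2*:b + c).
have H5 := nrm2_ge0 (eps - a).
have H6 := nrm2_ge0 (2*:a - b).
have E1 : 0 <= nrm2 a + nrm2 (2*:a - b) by apply: addr_ge0 => //; apply: nrm2_ge0.
have H7 := ler_wpM2r E1 H3.
have H8 := ler_wpM2l t0 H2.
have H5' := mulr_ge0 t0 H5.
have tg : 0 <= tau * (2 + 4 * gam) by apply: mulr_ge0 => //; lra.
have H6' := mulr_ge0 tg H6.
move: H1 H4 H5 H6 H7 H8 H5' H6'.
rewrite !nrm2E !(dotvDl, dotvBl, dotvZl, dotvDr, dotvBr, dotvZr, dotvNl, dotvNr).
rewrite ?(dotvC a (A *m a)) ?(dotvC b a) ?(dotvC c a) ?(dotvC c b) ?(dotvC eps a).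
move=> H1 H4 H5 H6 H7 H8 H5' H6'.
lra.
Qed.

End Helpers.
Arguments dotvC {R J}.
Arguments min0P {R p q}.
Arguments dotvDl {R J}.
Arguments dotvNl {R J}.
Arguments dotvZl {R J}.
Arguments dotvBl {R J}.
Arguments dotvDr {R J}.
Arguments dotvBr {R J}.
Arguments dotvZr {R J}.
Arguments dotvNr {R J}.
Arguments nrm2E {R J}.
Arguments nrm2_ge0 {R J}.
Arguments Nsq_ge0 {R J}.
Arguments var_ineq {R J}.
Arguments bdf2_step {R J}.

Definition Een {R : realType} {J : nat} (e : nat -> 'cV[R]_J) (k : nat) : R :=
  nrm2 (e k) + nrm2 (2 *: e k - e k.-1).

Lemma Een_ge0 {R : realType} {J : nat} (e : nat -> 'cV[R]_J) k : 0 <= Een e k.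
Proof. by apply: addr_ge0; apply: nrm2_ge0. Qed.

Lemma Een_ge {R : realType} {J : nat} (e : nat -> 'cV[R]_J) k : nrm2 (e k) <= Een e k.
Proof. by rewrite /Een lerDl; apply: nrm2_ge0. Qed.

Lemma Een1 {R : realType} {J : nat} (e : nat -> 'cV[R]_J) :
  Een e 1 <= 9 * nrm2 (e 1%N) + 2 * nrm2 (e 0%N).
Proof.
rewrite /Een /=.
have H := nrm2_ge0 (2 *: e 1%N + e 0%N).
move: H; rewrite !nrm2E !(dotvDl, dotvBl, dotvZl, dotvDr, dotvBr, dotvZr, dotvNl, dotvNr).
rewrite ?(dotvC (e 0%N) (e 1%N)).
move=> H; lra.
Qed.

Theorem proposition4p7 (R : realType) (T Xmin Xmax : R) (J : nat)
  (a b r phi f : R -> R -> R) (eta gam : R) :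
  0 < T -> Xmin < Xmax -> (0 < J)%N ->
  (* a, b, r bounded on the domain *)
  (exists M : R, forall t x, 0 < t < T -> Xmin < x < Xmax ->
      `|a t x| <= M /\ `|b t x| <= M /\ `|r t x| <= M) ->
  (* uniform ellipticity *)
  (exists eta0 : R, 0 < eta0 /\
      forall t x, 0 < t < T -> Xmin < x < Xmax -> eta0 <= a t x) ->
  (* a Lipschitz in x uniformly in t *)
  (exists L : R, forall t x y, 0 < t < T -> Xmin < x < Xmax -> Xmin < y < Xmax ->
      `|a t x - a t y| <= L * `|x - y|) ->
  (* coercivity constants eta > 0, gamma >= 0 *)
  0 < eta -> 0 <= gam ->
  (forall t, 0 <= t <= T -> forall e : 'cV[R]_J,
      dotv e (FDmat a b r Xmin Xmax J t *m e)
        >= eta * Nsq ((meshh Xmin Xmax J)^-1 *: e) - gam * nrm2 e) ->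
  exists tau0 : R, 0 < tau0 /\
  exists C1 gbar : R, 0 < gbar /\
  forall N : nat, (0 < N)%N -> T / N%:R <= tau0 ->
  let tau := T / N%:R in
  let tn := fun n : nat => n%:R * tau in
  let A := fun n : nat => FDmat a b r Xmin Xmax J (tn n) in
  let F := fun n : nat => gridv f Xmin Xmax J (tn n) in
  let G := fun n : nat => gridv (fun t x => phi t x + f t x) Xmin Xmax J (tn n) in
  forall (u v epsb q : nat -> 'cV[R]_J),
  (* BDF2 obstacle scheme for u *)
  (forall n, (1 <= n)%N -> (n.+1 <= N)%N -> forall i : 'I_J,
     Num.min
       (((1%:M + (2 / 3 * tau) *: A n.+1) *m u n.+1 - (4 / 3) *: u n
          + (1 / 3) *: u n.-1 + (2 / 3 * tau) *: q n.+1
          - (2 / 3 * tau) *: F n.+1) i 0)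
       ((u n.+1 - G n.+1) i 0) = 0) ->
  (* perturbed scheme for v *)
  (forall n, (1 <= n)%N -> (n.+1 <= N)%N -> forall i : 'I_J,
     Num.min
       (((1%:M + (2 / 3 * tau) *: A n.+1) *m v n.+1 - (4 / 3) *: v n
          + (1 / 3) *: v n.-1 + (2 / 3 * tau) *: q n.+1
          - (2 / 3 * tau) *: F n.+1 - (2 / 3 * tau) *: epsb n) i 0)
       ((v n.+1 - G n.+1) i 0) = 0) ->
  let e := fun n : nat => v n - u n in
  forall n : nat, (n.+1 <= N)%N ->
    expR (- gbar * tn n) * nrm2 (e n.+1)
      + tau * eta * \sum_(1 <= k < n.+1)
          expR (- gbar * tn k) * Nsq ((meshh Xmin Xmax J)^-1 *: e k.+1)
    <= C1 * (nrm2 (e 0%N) + nrm2 (e 1%N)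
             + tau * \sum_(1 <= k < n.+1) expR (- gbar * tn k) * nrm2 (epsb k)).
Proof.
move=> T0 _ J0 _ _ _ eta0 gam0 Hcoer.
pose gb := 2 + 4 * gam.
have gb0 : 0 < gb by rewrite /gb; lra.
exists (1 / (4 * gb)); split.
  by apply: divr_gt0 => //; lra.
exists 18, (2 * gb); split; first lra.
move=> N N0 Htau tau tn A F G u v epsb q Hu Hv e n Hn.
have Nr0 : 0 < N%:R :> R by rewrite ltr0n.
have tau0 : 0 < tau by rewrite /tau; apply: divr_gt0.
have xb : tau * gb <= 1 / 4.
  move: Htau; rewrite -/tau => Htau.
  have := ler_wpM2r (ltW gb0) Htau.
  have -> : 1 / (4 * gb) * gb = 1 / 4 by field; lra.
  by [].
pose alpha := expR (- (2 * gb) * tau).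
pose W := fun k : nat => expR (- (2 * gb) * tn k).
have Wstep : forall k, W k.+1 = W k * alpha.
  move=> k; rewrite /W /alpha -expRD; congr expR.
  by rewrite /tn -addn1 natrD; ring.
have W0 : W 0%N = 1 by rewrite /W /tn mul0r mulr0 expR0.
have W_ge0 : forall k, 0 <= W k by move=> k; apply: expR_ge0.
have Ha1 : alpha <= 1 - tau * gb.
  have h := expR_ge1Dx (2 * gb * tau).
  have m : alpha * expR (2 * gb * tau) = 1.
    by rewrite /alpha -expRD mulNr addNr expR0.
  have a0 : 0 < alpha by apply: expR_gt0.
  have := ler_wpM2l (ltW a0) h.
  rewrite m => h2.
  have x0 : 0 <= tau * gb by apply: mulr_ge0; lra.
  nra.
have Ha2 : 1 / 2 <= alpha.
  have h := expR_ge1Dx (- (2 * gb) * tau).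
  rewrite /alpha; lra.
have tnb : forall k, (k <= N)%N -> 0 <= tn k <= T.
  move=> k Hk; rewrite /tn /tau; apply/andP; split.
    by apply: mulr_ge0; [apply: ler0n | apply: ltW].
  have hk : k%:R <= N%:R :> R by rewrite ler_nat.
  have tpos : 0 <= T / N%:R by apply: ltW.
  have := ler_wpM2r tpos hk.
  have -> : N%:R * (T / N%:R) = T by field; lra.
  by [].
have step : forall k, (1 <= k)%N -> (k.+1 <= N)%N ->
   alpha * Een e k.+1 + 4 * tau * eta * Nsq ((meshh Xmin Xmax J)^-1 *: e k.+1)
   <= Een e k + 2 * tau * nrm2 (epsb k).
  move=> k k1 kN.
  rewrite /Een /=.
  apply: (bdf2_step (A k.+1) (e k.+1) (e k) (e k.-1) (epsb k) tau eta gam) => //.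
  - by apply: ltW.
  - set c := 2 / 3 * tau.
    pose Pv := (1%:M + c *: A k.+1) *m v k.+1 - (4 / 3) *: v k
          + (1 / 3) *: v k.-1 + c *: q k.+1 - c *: F k.+1 - c *: epsb k.
    pose Pu := (1%:M + c *: A k.+1) *m u k.+1 - (4 / 3) *: u k
          + (1 / 3) *: u k.-1 + c *: q k.+1 - c *: F k.+1.
    have hv := Hv k k1 kN; have hu := Hu k k1 kN.
    have I1 : 0 <= dotv Pv (u k.+1 - v k.+1).
      apply: var_ineq => [i|i]; first exact: hv.
      by have [] := min0P (hu i).
    have I2 : 0 <= dotv Pu (v k.+1 - u k.+1).
      apply: var_ineq => [i|i]; first exact: hu.
      by have [] := min0P (hv i).
    have D : e k.+1 + c *: (A k.+1 *m e k.+1) - (4 / 3) *: e k + (1 / 3) *: e k.-1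
             - c *: epsb k = Pv - Pu.
      rewrite /Pv /Pu /e !mulmxDl !mul1mx -!scalemxAl mulmxBr.
      move: (A k.+1 *m v k.+1) (A k.+1 *m u k.+1) => Av Au.
      apply/matrixP => i j; rewrite !mxE; ring.
    rewrite D dotvBl.
    move: I1 I2; rewrite -(opprB (v k.+1)) dotvNr -/(e k.+1) => I1 I2.
    lra.
  - by apply: Hcoer; apply: tnb.
have sum : forall m, (m.+1 <= N)%N ->
   W m.+1 * Een e m.+1
   + 4 * tau * eta * \sum_(1 <= k < m.+1) W k * Nsq ((meshh Xmin Xmax J)^-1 *: e k.+1)
   <= W 1%N * Een e 1 + 2 * tau * \sum_(1 <= k < m.+1) W k * nrm2 (epsb k).
  elim=> [|m IH] Hm.
    by rewrite !big_geq // !mulr0 !addr0.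
  rewrite (big_nat_recr m.+1) //= (big_nat_recr m.+1) //=.
  have IH' := IH (ltnW Hm).
  have S := step m.+1 erefl Hm.
  have S' := ler_wpM2l (W_ge0 m.+1) S.
  rewrite Wstep.
  move: IH' S'.
  set s1 := \sum_(1 <= k < m.+1) _.
  set s2 := \sum_(1 <= k < m.+1) _.
  move=> IH' S'.
  nra.
have Hs := sum n Hn.
have S1 : 0 <= \sum_(1 <= k < n.+1) W k * Nsq ((meshh Xmin Xmax J)^-1 *: e k.+1).
  by apply: sumr_ge0 => k _; apply: mulr_ge0 => //; apply: Nsq_ge0.
have S2 : 0 <= \sum_(1 <= k < n.+1) W k * nrm2 (epsb k).
  by apply: sumr_ge0 => k _; apply: mulr_ge0 => //; apply: nrm2_ge0.
have F1 : 0 <= tau * eta * \sum_(1 <= k < n.+1) W k * Nsq ((meshh Xmin Xmax J)^-1 *: e k.+1).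
  by apply: mulr_ge0 => //; apply: mulr_ge0; apply: ltW.
have F2 : 0 <= tau * \sum_(1 <= k < n.+1) W k * nrm2 (epsb k).
  by apply: mulr_ge0 => //; apply: ltW.
have F3 : W n * nrm2 (e n.+1) <= W n * Een e n.+1 by apply: ler_wpM2l => //; apply: Een_ge.
have F4 : 0 <= (2 * alpha - 1) * (W n * Een e n.+1).
  by apply: mulr_ge0; [lra | apply: mulr_ge0 => //; apply: Een_ge0].
have W1 : W 1%N <= 1.
  rewrite Wstep W0 mul1r.
  have : 0 <= tau * gb by apply: mulr_ge0; lra.
  lra.
have F5 : 0 <= (1 - W 1%N) * Een e 1 by apply: mulr_ge0; [lra | apply: Een_ge0].
have F6 := Een1 e.
have F7 : 0 <= W 1%N * (9 * nrm2 (e 1%N) + 2 * nrm2 (e 0%N) - Een e 1).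
  by apply: mulr_ge0 => //; lra.
have F8 := nrm2_ge0 (e 0%N).
have F9 := nrm2_ge0 (e 1%N).
have F10 : 0 <= (1 - W 1%N) * (9 * nrm2 (e 1%N) + 2 * nrm2 (e 0%N)).
  by apply: mulr_ge0; lra.
move: Hs; rewrite Wstep => Hs.
rewrite -/(W n).
lra.
Qed.
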